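(* (Stable Local Attractor.) Let $z^*\in\bigcap_{t=1}^M F(\mathcal{T}_t)$ and let $r=\min\{r_t: t\in\{1,\dots,M\}\}$, where $r_t=\min\{d_{sep}(z^*,C_t),\ d_{esc}(z^*,C_t)\}$ (alternatively, $r_t$ may be taken as: $\min\{d_{sep}(z^*,C_t),\ \tfrac{d_{sep}(z^*,C_t)+d_{esc}(z^*,C_t)}{2}\}$ if $|K_t(z^* )|=1$, and $\min\{g(x_i^*,x_j^*,w_i,w_j),\,g(y_i^*,y_j^*,h_i,h_j)\}$ if $|K_t(z^* )|=2$, where $C_t=C_{i,j}$, $z^*=(x^*,y^* )$ and $g(a,b,c,d)=|(a-b)+(c-d)/2|/\sqrt{2}$), and assume $r>0$. Let $\epsilon\in(0,r)$ be arbitrary and let $(z^n)_{n\ge0}$ be a sequential MAP trajectory. If $z^{n_0}\in B(z^*,\epsilon)$ for some $n_0$, then $z^n\in B(z^*,\epsilon)$ for all $n\ge n_0$, and $(z^n)$ converges to some common fixed point $\tilde z^*\in\bigcap_{t=1}^M F(\mathcal{T}_t)$.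
   Context: Fix reals $W,H>0$, integers $N\ge N_m\ge 2$, and widths $w_i>0$, heights $h_i>0$ for $1\le i\le N_m$. Points of $\mathbb{R}^{2N}$ are written $z=(x,y)$ with $x=(x_1,\dots,x_N)$, $y=(y_1,\dots,y_N)$. For $1\le i\le N_m$ let $B_i^x=\{z: 0\le x_i\le W-w_i\}$, $B_i^y=\{z: 0\le y_i\le H-h_i\}$; for $i\neq j$ let $B_{i,j}=B_i^x\cap B_i^y\cap B_j^x\cap B_j^y$, $O^x_{i,j}=\{z: x_i+w_i\le x_j\}$, $O^y_{i,j}=\{z: y_i+h_i\le y_j\}$. Define the closed convex sets $C_{i,j,\mathsf{L}}=O^x_{i,j}\cap B_{i,j}$, $C_{i,j,\mathsf{R}}=O^x_{j,i}\cap B_{i,j}$, $C_{i,j,\mathsf{B}}=O^y_{i,j}\cap B_{i,j}$, $C_{i,j,\mathsf{A}}=O^y_{j,i}\cap B_{i,j}$ (assumed nonempty) and $C_{i,j}=C_{i,j,\mathsf{L}}\cup C_{i,j,\mathsf{R}}\cup C_{i,j,\mathsf{B}}\cup C_{i,j,\mathsf{A}}$. Enumerate the pairs $1\le i<j\le N_m$ by $t=1,\dots,M$ and write $C_t=C_{i,j}$, $C_{t,k}=C_{i,j,k}$ for $k\in\{\mathsf{L},\mathsf{R},\mathsf{B},\mathsf{A}\}$. With $\|\cdot\|$ the Euclidean norm and $\mathrm{d}(z,C)=\inf_{c\in C}\|z-c\|$: $\mathcal{P}_t(z)=\{c\in C_t:\|z-c\|=\mathrm{d}(z,C_t)\}$,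 $P_{t,k}(z)$ is the unique nearest point of $C_{t,k}$ to $z$; for a fixed relaxation parameter $\lambda\in(0,2)$, $\mathcal{T}_t(z)=\{z+\lambda(p-z):p\in\mathcal{P}_t(z)\}$ and $F(\mathcal{T}_t)=\{z: z\in\mathcal{T}_t(z)\}$. Active indices: $K_t(z)=\{k: P_{t,k}(z)\in\mathcal{P}_t(z)\}$. $d_{esc}(z^*,C_t)=\inf\{\|z-z^*\| : z\notin C_{t,k}\text{ for some }k\in K_t(z^* )\}$; $d_{sep}(z^*,C_t)=\min\{\mathrm{d}(z^*,C_{t,k}) : k\notin K_t(z^* )\}$. $B(z,r)$ is the open Euclidean ball. A sequential MAP trajectory is a sequence with $z^{n+1}\in\mathcal{T}_{t_n}(z^n)$ for all $n\ge0$, where $t_n\in\{1,\dots,M\}$ and each sweep $\{t_{kM+1},\dots,t_{(k+1)M}\}$ equals $\{1,\dots,M\}$. *)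

(* Defs.v *)
From HB Require Import structures.
From mathcomp Require Import all_boot all_order all_algebra.
From mathcomp Require Import all_classical all_reals.
Set Implicit Arguments. Unset Strict Implicit. Unset Printing Implicit Defensive.
Import Order.TTheory GRing.Theory Num.Theory.
Local Open Scope ring_scope.
Local Open Scope classical_set_scope.

(* The four relative positions L, R, B (below), A (above). *)
Inductive side := SL | SR | SB | SA.

Section MAPDefs.
Variables (R : realType) (N Nm : nat) (W H : R) (w h : 'I_N -> R).

(* Points z = (x, y) of R^(2N), x, y in R^N (coordinates indexed by 'I_N,
   i.e. 0-based: box i of the paper is index i-1 here). *)
Definition pt := (('I_N -> R) * ('I_N -> R))%type.

Definition ptsub (z c : pt) : pt :=
  (fun i => z.1 i - c.1 i, fun i => z.2 i - c.2 i).

Definition ptnorm (z : pt) : R :=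
  Num.sqrt (\sum_(i < N) z.1 i ^+ 2 + \sum_(i < N) z.2 i ^+ 2).

Definition dist (z c : pt) : R := ptnorm (ptsub z c).

Definition relax (lam : R) (z p : pt) : pt :=
  (fun i => z.1 i + lam * (p.1 i - z.1 i), fun i => z.2 i + lam * (p.2 i - z.2 i)).

(* Pairs (i, j) with i < j < Nm (0-based): these are the indices t = 1..M. *)
Definition pairT := {p : 'I_N * 'I_N | (p.1 < p.2)%N && (p.2 < Nm)%N}.

Definition Bx (i : 'I_N) : set pt := [set z | 0 <= z.1 i <= W - w i].
Definition By (i : 'I_N) : set pt := [set z | 0 <= z.2 i <= H - h i].
Definition Bij (i j : 'I_N) : set pt := Bx i `&` By i `&` Bx j `&` By j.
Definition Ox (i j : 'I_N) : set pt := [set z | z.1 i + w i <= z.1 j].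
Definition Oy (i j : 'I_N) : set pt := [set z | z.2 i + h i <= z.2 j].

Definition Cijk (i j : 'I_N) (k : side) : set pt :=
  match k with
  | SL => Ox i j `&` Bij i j
  | SR => Ox j i `&` Bij i j
  | SB => Oy i j `&` Bij i j
  | SA => Oy j i `&` Bij i j
  end.

Definition Cij (i j : 'I_N) : set pt :=
  Cijk i j SL `|` Cijk i j SR `|` Cijk i j SB `|` Cijk i j SA.

Definition Ct (t : pairT) : set pt := Cij (val t).1 (val t).2.
Definition Ctk (t : pairT) (k : side) : set pt := Cijk (val t).1 (val t).2 k.

Definition dset (z : pt) (C : set pt) : R := inf [set dist z c | c in C].

Definition Pset (C : set pt) (z : pt) : set pt :=
  [set c | C c /\ dist z c = dset z C].

Definition Tmap (lam : R) (t : pairT) (z : pt) : set pt :=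
  [set relax lam z p | p in Pset (Ct t) z].

Definition Fix (lam : R) (t : pairT) : set pt := [set z | Tmap lam t z z].

(* active indices: k such that the (unique) nearest point P_{t,k}(z) of
   C_{t,k} belongs to P_t(z) *)
Definition Kset (t : pairT) (z : pt) : set side :=
  [set k | exists c, Pset (Ctk t k) z c /\ Pset (Ct t) z c].

Definition desc (zs : pt) (t : pairT) : R :=
  inf [set dist z zs | z in [set z | exists k, Kset t zs k /\ ~ Ctk t k z]].

Definition dsep (zs : pt) (t : pairT) : R :=
  inf [set dset zs (Ctk t k) | k in ~` Kset t zs].

Definition rt_primary (zs : pt) (t : pairT) : R :=
  Num.min (dsep zs t) (desc zs t).

Definition gfun (a b c d : R) : R := Num.norm ((a - b) + (c - d) / 2) / Num.sqrt 2.

(* Alternative choice of r_t; the number of active indices is always 1 or 2 at a common fixed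
   point, the last branch is unreachable there. *)
Definition rt_alt (zs : pt) (t : pairT) : R :=
  let K := Kset t zs in
  let ii := (val t).1 in let jj := (val t).2 in
  if pselect (exists k, K = [set k]) then
    Num.min (dsep zs t) ((dsep zs t + desc zs t) / 2)
  else if pselect (exists k1 k2, k1 <> k2 /\ K = [set k1] `|` [set k2]) then
    Num.min (gfun (zs.1 ii) (zs.1 jj) (w ii) (w jj)) (gfun (zs.2 ii) (zs.2 jj) (h ii) (h jj))
  else rt_primary zs t.

Definition ball_pt (zs : pt) (r : R) : set pt := [set z | dist z zs < r].

Definition MAP_traj (lam : R) (z : nat -> pt) (tt : nat -> pairT) : Prop :=
  (forall n, Tmap lam (tt n) (z n) (z n.+1)) /\
  (forall (k : nat) (p : pairT), exists n,
      (k * #|{: pairT}| < n <= k.+1 * #|{: pairT}|)%N /\ tt n = p).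

Definition attractor_claim (lam : R) (zs : pt) (rt : pairT -> R) : Prop :=
  let r := inf (range rt) in
  0 < r ->
  forall eps : R, 0 < eps -> eps < r ->
  forall (z : nat -> pt) (tt : nat -> pairT), MAP_traj lam z tt ->
  forall n0 : nat, ball_pt zs eps (z n0) ->
  (forall n, (n0 <= n)%N -> ball_pt zs eps (z n)) /\
  exists zt : pt, (forall t, Fix lam t zt) /\
    (forall e : R, 0 < e -> exists m, forall n, (m <= n)%N -> dist (z n) zt < e).

End MAPDefs.

(* Main.v *)
From HB Require Import structures.
From mathcomp Require Import all_boot all_order all_algebra.
From mathcomp Require Import all_classical all_reals all_analysis.
From mathcomp Require Import ring lra zify.
Require Import Defs.
Import Order.TTheory GRing.Theory Num.Theory.
Import numFieldNormedType.Exports.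
Local Open Scope ring_scope.
Local Open Scope classical_set_scope.
Set Implicit Arguments. Unset Strict Implicit. Unset Printing Implicit Defensive.

Section Vec.
Variable R : realType.
Variable N : nat.
Local Notation pt := (pt R N).

Definition n2 (x : pt) : R := \sum_(i < N) x.1 i ^+ 2 + \sum_(i < N) x.2 i ^+ 2.
Definition ip (x y : pt) : R := \sum_(i < N) x.1 i * y.1 i + \sum_(i < N) x.2 i * y.2 i.
Definition lin (a : R) (x : pt) (b : R) (y : pt) : pt :=
  (fun i => a * x.1 i + b * y.1 i, fun i => a * x.2 i + b * y.2 i).

Lemma pt_ext (x y : pt) : (forall i, x.1 i = y.1 i) -> (forall i, x.2 i = y.2 i) -> x = y.
Proof.
case: x => x1 x2; case: y => y1 y2 /= h1 h2.
by rewrite (boolp.funext h1) (boolp.funext h2).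
Qed.

Lemma sum_sq_lin (a b : R) (f g : 'I_N -> R) :
  \sum_(i < N) (a * f i + b * g i) ^+ 2 =
  a ^+ 2 * \sum_(i < N) f i ^+ 2 + 2 * a * b * \sum_(i < N) f i * g i
  + b ^+ 2 * \sum_(i < N) g i ^+ 2.
Proof.
rewrite !mulr_sumr -!big_split /=; apply: eq_bigr => i _; ring.
Qed.

Lemma n2_lin a (x : pt) b (y : pt) : n2 (lin a x b y) = a ^+ 2 * n2 x + 2 * a * b * ip x y + b ^+ 2 * n2 y.
Proof. rewrite /n2 /ip /lin /= !sum_sq_lin; ring. Qed.

Lemma ipC (x y : pt) : ip x y = ip y x.
Proof. by rewrite /ip; congr (_ + _); apply: eq_bigr => i _; rewrite mulrC. Qed.

Lemma n2_ge0 (x : pt) : 0 <= n2 x.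
Proof. by rewrite /n2 addr_ge0 // sumr_ge0 // => i _; rewrite sqr_ge0. Qed.

Lemma ptnormE (x : pt) : ptnorm x = Num.sqrt (n2 x).
Proof. by []. Qed.

Lemma distE (x y : pt) : dist x y = Num.sqrt (n2 (ptsub x y)).
Proof. by []. Qed.

Lemma dist_ge0 (x y : pt) : 0 <= dist x y.
Proof. exact: sqrtr_ge0. Qed.

Lemma sqr_dist (x y : pt) : dist x y ^+ 2 = n2 (ptsub x y).
Proof. by rewrite distE sqr_sqrtr // n2_ge0. Qed.

Lemma sq_le_sum (f : 'I_N -> R) i : f i ^+ 2 <= \sum_(k < N) f k ^+ 2.
Proof.
rewrite (bigD1 i) //= lerDl sumr_ge0 // => k _; exact: sqr_ge0.
Qed.

Lemma sum_sq_ge0 (f : 'I_N -> R) : 0 <= \sum_(k < N) f k ^+ 2.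
Proof. by rewrite sumr_ge0 // => k _; rewrite sqr_ge0. Qed.

Lemma coord_le_n2 (x : pt) i : x.1 i ^+ 2 <= n2 x /\ x.2 i ^+ 2 <= n2 x.
Proof.
have h1 := sq_le_sum x.1 i; have h2 := sq_le_sum x.2 i.
have g1 := sum_sq_ge0 x.1; have g2 := sum_sq_ge0 x.2.
rewrite /n2; split; lra.
Qed.

Lemma n2_eq0 (x : pt) : n2 x = 0 -> forall i, x.1 i = 0 /\ x.2 i = 0.
Proof.
move=> h i; have [c1 c2] := coord_le_n2 x i.
have s1 := sqr_ge0 (x.1 i); have s2 := sqr_ge0 (x.2 i).
have a1 : x.1 i ^+ 2 = 0 by lra.
have a2 : x.2 i ^+ 2 = 0 by lra.
by split; apply/eqP; rewrite -sqrf_eq0; apply/eqP.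
Qed.

Lemma CS (x y : pt) : ip x y <= Num.sqrt (n2 x) * Num.sqrt (n2 y).
Proof.
have key : forall t, 0 <= n2 x + 2 * t * ip x y + t ^+ 2 * n2 y.
  move=> t; have := n2_ge0 (lin 1 x t y); rewrite n2_lin; lra.
have A0 := n2_ge0 y; have C0 := n2_ge0 x.
have hB : ip x y ^+ 2 <= n2 x * n2 y.
  have [Apos|A0'] := ltrP 0 (n2 y).
    have := key (- (ip x y / n2 y)).
    set B := ip x y; set A := n2 y; set C := n2 x => h.
    have e : C + 2 * - (B / A) * B + (- (B / A)) ^+ 2 * A = C - B ^+ 2 / A.
      by field; rewrite gt_eqF.
    rewrite e in h.
    have : B ^+ 2 / A <= C by lra.
    by rewrite ler_pdivrMr // mulrC.
  have Ae : n2 y = 0 by apply/eqP; rewrite eq_le A0' A0.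
  have [Be|Bne] := eqVneq (ip x y) 0.
    by rewrite Be Ae; lra.
  have := key (- (n2 x + 1) / (2 * ip x y)).
  rewrite Ae mulr0 addr0.
  have -> : 2 * (- (n2 x + 1) / (2 * ip x y)) * ip x y = - (n2 x + 1).
    by field.
  lra.
apply: (le_trans (ler_norm _)).
by rewrite -sqrtrM // -sqrtr_sqr ler_sqrt // mulr_ge0.
Qed.

Lemma norm_add (u v : pt) :
  Num.sqrt (n2 (lin 1 u 1 v)) <= Num.sqrt (n2 u) + Num.sqrt (n2 v).
Proof.
have h := CS u v.
have su := sqrtr_ge0 (n2 u); have sv := sqrtr_ge0 (n2 v).
rewrite -[X in _ <= X]ger0_norm ?addr_ge0 // -sqrtr_sqr ler_sqrt ?sqr_ge0 //.
rewrite n2_lin sqrrD !sqr_sqrtr ?n2_ge0 //; lra.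
Qed.

Lemma dist_tri (x y z : pt) : dist x z <= dist x y + dist y z.
Proof.
rewrite !distE.
have -> : ptsub x z = lin 1 (ptsub x y) 1 (ptsub y z).
  by apply: pt_ext => i /=; ring.
exact: norm_add.
Qed.

Lemma distC (x y : pt) : dist x y = dist y x.
Proof.
rewrite !distE; congr Num.sqrt.
have -> : ptsub y x = lin (-1) (ptsub x y) 0 (ptsub x y).
  by apply: pt_ext => i /=; ring.
rewrite n2_lin; ring.
Qed.

Lemma dist_coord (x y : pt) i : `|x.1 i - y.1 i| <= dist x y /\ `|x.2 i - y.2 i| <= dist x y.
Proof.
have [h1 h2] := coord_le_n2 (ptsub x y) i.
by rewrite distE -!sqrtr_sqr !ler_sqrt ?n2_ge0.
Qed.

Lemma dist0 (x : pt) : dist x x = 0.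
Proof.
rewrite distE (_ : ptsub x x = lin 0 x 0 x) ?n2_lin.
  by rewrite expr0n /= !(mul0r, mulr0, add0r, addr0) sqrtr0.
by apply: pt_ext => i /=; ring.
Qed.

Lemma dist_eq0 (x y : pt) : dist x y = 0 -> x = y.
Proof.
move=> h; have : n2 (ptsub x y) = 0 by rewrite -sqr_dist h expr0n.
move/n2_eq0 => e; apply: pt_ext => i; have [e1 e2] := e i; move: e1 e2 => /=; lra.
Qed.

Lemma norm_scale (a : R) (u : pt) : Num.sqrt (n2 (lin a u 0 u)) = `|a| * Num.sqrt (n2 u).
Proof.
rewrite n2_lin expr0n /= !(mul0r, mulr0, addr0) sqrtrM ?sqr_ge0 // sqrtr_sqr //.
Qed.

Lemma dist_coord_lt (p x : pt) e : dist p x < e -> forall c,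
  ((p.1 c - x.1 c < e /\ x.1 c - p.1 c < e) /\ (p.2 c - x.2 c < e /\ x.2 c - p.2 c < e)).
Proof.
move=> hd c; have [h1 h2] := dist_coord p x c.
move: (le_lt_trans h1 hd) (le_lt_trans h2 hd); rewrite !ltr_norml => /andP[a b] /andP[c' d].
by split; split; lra.
Qed.

Lemma ge0_eps (a : R) : (forall e, 0 < e -> - e <= a) -> 0 <= a.
Proof.
move=> h; rewrite leNgt; apply/negP => a0.
have := h (- a / 2); rewrite ltr_pdivlMr // mul0r oppr_gt0 => /(_ a0); lra.
Qed.

End Vec.


Section BW.
Variable R : realType.

Definition econv (v : nat -> R) (l : R) :=
  forall d, 0 < d -> exists K, forall k, (K <= k)%N -> `|v k - l| < d.

Lemma cvgn_econv (v : nat -> R) : cvgn v -> exists l, econv v l.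
Proof.
move=> cv; exists (limn v) => d d0.
have := (cvgrPdist_lt _ _).1 cv d d0.
case=> K _ hK; exists K => k hk; rewrite distrC; exact: hK.
Qed.

Lemma bounded_of (v : nat -> R) (B : R) : (forall n, `|v n| <= B) -> bounded_fun v.
Proof.
move=> hB; exists B; split; first exact: num_real.
move=> M hM n _; apply: le_trans (hB n) _; exact: ltW.
Qed.

Lemma incr_ge (f : nat -> nat) : increasing_seq f -> forall k, (k <= f k)%N.
Proof.
move=> hf; elim=> [|k IH] //.
have : (f k < f k.+1)%N.
  by move/increasing_seqP : hf => /(_ k).
by move=> h; apply: leq_ltn_trans IH h.
Qed.

Lemma BWfin (I : finType) (u : I -> nat -> R) :
  (forall i, exists B, forall n, `|u i n| <= B) ->
  exists f : nat -> nat, increasing_seq f /\ exists l : I -> R, forall i, econv (u i \o f) (l i).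
Proof.
move=> hB.
suff : forall s : seq I, exists f : nat -> nat, increasing_seq f /\
   exists l : I -> R, forall i, i \in s -> econv (u i \o f) (l i).
  case/(_ (enum I)) => f [hf [l hl]]; exists f; split => // ; exists l => i.
  by apply: hl; rewrite mem_enum.
elim=> [|a s [f [hf [l hl]]]].
  by exists id; split => //; exists (fun=> 0).
have [B hBa] := hB a.
have [g hg cg] := @bolzano_weierstrass R (u a \o f) (@bounded_of (u a \o f) B (fun n => hBa (f n))).
have [la hla] := cvgn_econv cg.
exists (f \o g); split.
  by move=> m n /=; apply: (etrans (hf _ _)); apply: hg.
exists (fun i => if i == a then la else l i) => i; rewrite inE.
case: eqP => [-> _|_ /= /hl hi]; first exact: hla.
move=> d d0; have [K hK] := hi d d0; exists K => k hk /=.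
apply: hK; apply: leq_trans hk _; exact: incr_ge.
Qed.
End BW.


Section Geo.
Variables (R : realType) (N : nat) (W H : R) (w h : 'I_N -> R).
Local Notation pt := (pt R N).

Definition ms (i j : 'I_N) (k : side) (x : pt) : R :=
  match k with
  | SL => x.1 j - x.1 i - w i
  | SR => x.1 i - x.1 j - w j
  | SB => x.2 j - x.2 i - h i
  | SA => x.2 i - x.2 j - h j
  end.

Definition Bone (i : 'I_N) (x : pt) : Prop :=
  [/\ 0 <= x.1 i, 0 <= W - w i - x.1 i, 0 <= x.2 i & 0 <= H - h i - x.2 i].

Lemma CijkP i j k x :
  Cijk W H w h i j k x <-> 0 <= ms i j k x /\ Bone i x /\ Bone j x.
Proof.
rewrite /Bone; case: k; rewrite /= /Ox /Oy /Defs.Bij /Defs.Bx /Defs.By /=;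
split => [[h1 [[[/andP[a1 a2] /andP[b1 b2]] /andP[c1 c2]] /andP[d1 d2]]]
         | [h1 [[a1 a2 b1 b2] [c1 c2 d1 d2]]]];
by (repeat split; try (apply/andP; split); lra).
Qed.

Lemma Cijk_conv i j k (x y : pt) (t : R) : 0 <= t <= 1 ->
  Cijk W H w h i j k x -> Cijk W H w h i j k y -> Cijk W H w h i j k (lin (1 - t) x t y).
Proof.
move=> /andP[t0 t1]; rewrite !CijkP /Bone.
case: k => /= -[m1 [[a1 a2 a3 a4] [b1 b2 b3 b4]]] [m2 [[c1 c2 c3 c4] [d1 d2 d3 d4]]];
by (repeat split; nra).
Qed.

Lemma Cijk_closed i j k (x : pt) :
  (forall e, 0 < e -> exists p, dist p x < e /\ Cijk W H w h i j k p) ->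
  Cijk W H w h i j k x.
Proof.
move=> hC.
have hC' : forall e, 0 < e -> exists p : pt, (0 <= ms i j k p /\ Bone i p /\ Bone j p) /\
   ((p.1 i - x.1 i < e /\ x.1 i - p.1 i < e) /\ (p.2 i - x.2 i < e /\ x.2 i - p.2 i < e)) /\
   ((p.1 j - x.1 j < e /\ x.1 j - p.1 j < e) /\ (p.2 j - x.2 j < e /\ x.2 j - p.2 j < e)).
  move=> e e0; have [p [hd hp]] := hC e e0; exists p; split; first exact/CijkP.
  by split; apply: dist_coord_lt.
apply/CijkP; rewrite /Bone.
repeat split; apply: ge0_eps => e e0;
  (have e20 : 0 < e / 2 by rewrite divr_gt0);
  have [p [[m [[a1 a2 a3 a4] [b1 b2 b3 b4]]] [[[c1 c2] [c3 c4]] [[d1 d2] [d3 d4]]]]] := hC' _ e20;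
  move: m; clear -a1 a2 a3 a4 b1 b2 b3 b4 c1 c2 c3 c4 d1 d2 d3 d4 e0; case: k => /= m; lra.
Qed.

Lemma Cijk_gap i j k (x : pt) : ~ Cijk W H w h i j k x ->
  exists2 g, 0 < g & forall p, dist p x < g -> ~ Cijk W H w h i j k p.
Proof.
move=> nC; apply: contrapT => hne; apply: nC; apply: Cijk_closed => e e0.
apply: contrapT => hnp; apply: hne; exists e => // p dp Cp; apply: hnp; by exists p.
Qed.

End Geo.


Section InfR.
Variable R : realType.
Lemma inf_le_elt (E : set R) x : (forall y, E y -> 0 <= y) -> E x -> inf E <= x.
Proof. by move=> h Ex; apply: (ge_inf _ Ex); exists 0 => y /h. Qed.

Lemma inf_ge0 (E : set R) : (forall y, E y -> 0 <= y) -> 0 <= inf E.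
Proof.
move=> h; have [->|/set0P ne] := eqVneq E set0; first by rewrite inf0.
by apply: lb_le_inf => // y /h.
Qed.
End InfR.

Section Proj.
Variables (R : realType) (N Nm : nat) (W H : R) (w h : 'I_N -> R).
Local Notation pt := (pt R N).
Local Notation Ct := (@Ct R N Nm W H w h).
Local Notation Ctk := (@Ctk R N Nm W H w h).

Lemma dset_le (z : pt) (C : set pt) c : C c -> dset z C <= dist z c.
Proof. move=> Cc; apply: inf_le_elt; last by exists c. by move=> y [c' _ <-]; exact: dist_ge0. Qed.

Lemma dset_ge0 (z : pt) (C : set pt) : 0 <= dset z C.
Proof. by apply: inf_ge0 => y [c' _ <-]; exact: dist_ge0. Qed.

Lemma Pset_min (C : set pt) z p : Pset C z p -> C p /\ forall c, C c -> dist z p <= dist z c.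
Proof. by case=> Cp e; split => // c Cc; rewrite e; exact: dset_le. Qed.

Lemma dset_in (C : set pt) z : C z -> dset z C = 0.
Proof. move=> Cz; apply/eqP; rewrite eq_le dset_ge0 andbT; rewrite -(dist0 z); exact: dset_le. Qed.

Lemma Pset_self (C : set pt) z p : C z -> Pset C z p -> p = z.
Proof.
move=> Cz /Pset_min [Cp hm]; have := hm z Cz; rewrite dist0 => hz.
have : dist z p = 0 by apply/eqP; rewrite eq_le hz dist_ge0.
by move/dist_eq0.
Qed.

Lemma Pset_in (C : set pt) z : C z -> Pset C z z.
Proof. by move=> Cz; split => //; rewrite dist0 dset_in. Qed.

Lemma Ctk_Ct t k c : Ctk t k c -> Ct t c.
Proof. by rewrite /Ct /Ctk /Cij; case: k => hh; [left;left;left|left;left;right|left;right|right]. Qed.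

Lemma Ct_ex t c : Ct t c -> exists k, Ctk t k c.
Proof. by case=> [[[hh|hh]|hh]|hh]; [exists SL|exists SR|exists SB|exists SA]. Qed.

Lemma dist_n2 (z p c : pt) : dist z p <= dist z c -> n2 (ptsub z p) <= n2 (ptsub z c).
Proof. by rewrite !distE ler_sqrt // n2_ge0. Qed.

Lemma proj_ineq t k (z p s : pt) : Pset (Ct t) z p -> Ctk t k s -> Ctk t k p ->
  ip (ptsub z p) (ptsub s p) <= 0.
Proof.
move=> /Pset_min [_ hm] Cs Cp.
have key : forall tau, 0 < tau <= 1 -> 2 * ip (ptsub z p) (ptsub s p) <= tau * n2 (ptsub s p).
  move=> tau /andP[t0 t1].
  have Cc : Ctk t k (lin (1 - tau) p tau s) by apply: Cijk_conv => //; rewrite (ltW t0).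
  have := dist_n2 (hm _ (Ctk_Ct Cc)).
  have -> : ptsub z (lin (1 - tau) p tau s) = lin 1 (ptsub z p) (- tau) (ptsub s p).
    by apply: pt_ext => i /=; ring.
  rewrite n2_lin => hh.
  have : tau * (2 * ip (ptsub z p) (ptsub s p)) <= tau * (tau * n2 (ptsub s p)) by nra.
  by rewrite ler_pM2l.
move: key; set a := ip (ptsub z p) (ptsub s p); set b := n2 (ptsub s p) => key.
have b0 : 0 <= b by exact: n2_ge0.
rewrite leNgt; apply/negP => a0.
have t0 : 0 < a / (b + a) by rewrite divr_gt0 //; lra.
have t1 : a / (b + a) <= 1 by rewrite ler_pdivrMr; lra.
have e : a / (b + a) * (b + a) = a by rewrite divfK //; lra.
have := key (a / (b + a)); rewrite t0 t1 => /(_ isT); nra.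
Qed.

Lemma fejer t k (lam : R) (z p s : pt) : 0 < lam < 2 -> Pset (Ct t) z p -> Ctk t k s -> Ctk t k p ->
  n2 (ptsub (relax lam z p) s) <= n2 (ptsub z s) - lam * (2 - lam) * n2 (ptsub p z).
Proof.
move=> /andP[l0 l2] hP Cs Cp; have hi := proj_ineq hP Cs Cp.
have -> : ptsub (relax lam z p) s = lin (1 - lam) (ptsub z p) (-1) (ptsub s p).
  by apply: pt_ext => i /=; ring.
have -> : ptsub z s = lin 1 (ptsub z p) (-1) (ptsub s p).
  by apply: pt_ext => i /=; ring.
have -> : ptsub p z = lin (-1) (ptsub z p) 0 (ptsub z p).
  by apply: pt_ext => i /=; ring.
rewrite !n2_lin; nra.
Qed.

Lemma step_n2 (lam : R) (z p : pt) : n2 (ptsub (relax lam z p) z) = lam ^+ 2 * n2 (ptsub p z).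
Proof.
have -> : ptsub (relax lam z p) z = lin lam (ptsub p z) 0 (ptsub p z).
  by apply: pt_ext => i /=; ring.
rewrite n2_lin; ring.
Qed.
End Proj.


Section Traj.
Variables (R : realType) (N Nm : nat) (W H : R) (w h : 'I_N -> R) (lam : R).
Local Notation pt := (pt R N).
Local Notation Ct := (@Ct R N Nm W H w h).
Local Notation Ctk := (@Ctk R N Nm W H w h).
Local Notation Tmap := (@Tmap R N Nm W H w h lam).
Hypothesis hlam : 0 < lam < 2.

Definition Good (c : pt) (r : R) := forall z, dist z c < r ->
  forall t p, Pset (Ct t) z p -> exists k, Ctk t k c /\ Ctk t k p.

Lemma Good_mono c r r' : r' <= r -> Good c r -> Good c r'.
Proof. by move=> hr hG z hz; apply: hG; apply: lt_le_trans hz hr. Qed.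

Lemma good_step c r z z' t : Good c r -> dist z c < r -> Tmap t z z' ->
  exists p, [/\ Pset (Ct t) z p, z' = relax lam z p &
    n2 (ptsub z' c) <= n2 (ptsub z c) - lam * (2 - lam) * n2 (ptsub p z)].
Proof.
move=> hG hz [p hp <-]; exists p; split => //.
have [k [Cc Cp]] := hG _ hz _ _ hp.
exact: fejer hlam hp Cc Cp.
Qed.

Lemma kappa_gt0 : 0 < lam * (2 - lam).
Proof. case/andP: hlam => l0 l2; apply: mulr_gt0 => //; lra. Qed.

Lemma n2_dist_le (x y a b : pt) : n2 (ptsub x y) <= n2 (ptsub a b) -> dist x y <= dist a b.
Proof. by move=> hh; rewrite !distE ler_sqrt // n2_ge0. Qed.

Variables (z : nat -> pt) (tt : nat -> pairT N Nm).
Hypothesis htr : forall n, Tmap (tt n) (z n) (z n.+1).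

Lemma INV c r n0 : Good c r -> dist (z n0) c < r ->
  forall n, (n0 <= n)%N -> dist (z n) c < r /\ n2 (ptsub (z n.+1) c) <= n2 (ptsub (z n) c).
Proof.
move=> hG h0.
suff hd : forall n, (n0 <= n)%N -> dist (z n) c < r.
  move=> n hn; split; first exact: hd.
  have [p [_ _ hle]] := good_step hG (hd n hn) (htr n).
  have := kappa_gt0; have := n2_ge0 (ptsub p (z n)); nra.
elim=> [|n IH]; first by rewrite leqn0 => /eqP <-.
rewrite leq_eqVlt => /orP[/eqP <- //|hn].
have hzn := IH hn.
have [p [_ _ hle]] := good_step hG hzn (htr n).
apply: le_lt_trans hzn; apply: n2_dist_le.
have := kappa_gt0; have := n2_ge0 (ptsub p (z n)); nra.
Qed.

Lemma V_mono c r n0 : Good c r -> dist (z n0) c < r ->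
  forall m n, (n0 <= m)%N -> (m <= n)%N -> n2 (ptsub (z n) c) <= n2 (ptsub (z m) c).
Proof.
move=> hG h0 m n hm; elim: n => [|n IH]; first by rewrite leqn0 => /eqP ->.
rewrite leq_eqVlt => /orP[/eqP -> //|hn].
apply: le_trans (IH hn); exact: (INV hG h0 (leq_trans hm hn)).2.
Qed.

Lemma steps_small c r n0 : Good c r -> dist (z n0) c < r ->
  forall eta, 0 < eta -> exists m0, (n0 <= m0)%N /\
    forall n, (m0 <= n)%N -> dist (z n.+1) (z n) < eta.
Proof.
move=> hG h0 eta eta0.
set V := fun n => n2 (ptsub (z n) c).
set E := [set V n | n in [set n | (n0 <= n)%N]].
have E0 : forall y, E y -> 0 <= y by move=> y [n _ <-]; exact: n2_ge0.
have hk := kappa_gt0.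
set cc := eta ^+ 2 * (lam * (2 - lam)) / 8.
have cc0 : 0 < cc by rewrite /cc divr_gt0 // mulr_gt0 // exprn_gt0.
have hinf : has_inf E by split; [exists (V n0), n0 => /= | exists 0 => y /E0].
have [e [m0 hm0 <-] he] := inf_adherent cc0 hinf.
exists m0; split => // n hn.
have hn0 : (n0 <= n)%N by apply: leq_trans hm0 hn.
have [p [_ e1 hle]] := good_step hG ((INV hG h0 hn0).1) (htr n).
have hVn : V n <= V m0 by apply: (V_mono hG h0) => //.
have hinfn : inf E <= V n.+1 by apply: inf_le_elt => //; exists n.+1 => //=; apply: leqW.
have hs : n2 (ptsub (z n.+1) (z n)) = lam ^+ 2 * n2 (ptsub p (z n)) by rewrite e1 step_n2.
have hp0 := n2_ge0 (ptsub p (z n)).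
have hl4 : lam ^+ 2 <= 4 by case/andP: hlam => l0 l2; nra.
have hsq : n2 (ptsub (z n.+1) (z n)) < eta ^+ 2.
  rewrite hs.
  have h1 : lam * (2 - lam) * n2 (ptsub p (z n)) < cc.
    rewrite /V in hVn hinfn he; lra.
  have h2 : lam * (2 - lam) * (lam ^+ 2 * n2 (ptsub p (z n))) <= lam * (2 - lam) * (4 * n2 (ptsub p (z n))).
    by rewrite ler_pM2l // ler_wpM2r.
  have h3 : lam * (2 - lam) * (lam ^+ 2 * n2 (ptsub p (z n))) < lam * (2 - lam) * eta ^+ 2.
    have hpos : 0 < eta ^+ 2 * (lam * (2 - lam)) by rewrite mulr_gt0 // exprn_gt0.
    rewrite /cc in h1; lra.
  by rewrite ltr_pM2l in h3.
have := sqr_dist (z n.+1) (z n); have := dist_ge0 (z n.+1) (z n); nra.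
Qed.

Lemma chain m0 eta : (forall n, (m0 <= n)%N -> dist (z n.+1) (z n) < eta) ->
  forall n L, (m0 <= n)%N -> dist (z (n + L)) (z n) <= L%:R * eta.
Proof.
move=> hs n L hn; elim: L => [|L IH]; first by rewrite addn0 dist0 mul0r.
rewrite addnS; apply: le_trans (dist_tri _ (z (n + L)) _) _.
have := hs (n + L) (leq_trans hn (leq_addr _ _)).
rewrite -[L.+1]addn1 natrD mulrDl mul1r; lra.
Qed.

End Traj.


Section Clus.
Variables (R : realType) (N : nat).
Local Notation pt := (pt R N).

Lemma cluster (u : nat -> pt) (c : pt) (B : R) : (forall n, dist (u n) c <= B) ->
  exists zt : pt, forall e, 0 < e -> forall m, exists n, (m <= n)%N /\ dist (u n) zt < e.
Proof.
move=> hB.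
pose uu (bi : bool * 'I_N) n := if bi.1 then (u n).1 bi.2 else (u n).2 bi.2.
have hb : forall bi, exists B', forall n, `|uu bi n| <= B'.
  case=> b i; exists (`|(if b then c.1 i else c.2 i)| + B) => n.
  have [h1 h2] := dist_coord (u n) c i.
  have hBn := hB n.
  rewrite /uu /=; case: b.
    have := ler_normD ((u n).1 i - c.1 i) (c.1 i); rewrite subrK; lra.
  have := ler_normD ((u n).2 i - c.2 i) (c.2 i); rewrite subrK; lra.
have [f [hf [l hl]]] := BWfin hb.
exists (fun i => l (true, i), fun i => l (false, i)) => e e0 m.
set d := e / (2 * N%:R + 1).
have d0 : 0 < d by rewrite divr_gt0 //; have := ler0n R N; lra.
have [K hK] := boolp.choice (fun bi => hl bi d d0).
pose K0 := \max_(bi : bool * 'I_N) K bi.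
exists (f (maxn K0 m)); split; first by apply: leq_trans (incr_ge hf _); exact: leq_maxr.
have hk : forall bi, `|uu bi (f (maxn K0 m)) - l bi| < d.
  move=> bi; apply: (hK bi); apply: leq_trans (leq_maxl _ _); exact: leq_bigmax.
have hsq : n2 (ptsub (u (f (maxn K0 m))) (fun i => l (true, i), fun i => l (false, i))) <= 2 * N%:R * d ^+ 2.
  rewrite /n2 /=.
  have e1 : forall b i, (uu (b, i) (f (maxn K0 m)) - l (b, i)) ^+ 2 <= d ^+ 2.
    move=> b i; have := hk (b, i); rewrite ltr_norml => /andP[a1 a2]; nra.
  have s1 : \sum_(i < N) ((u (f (maxn K0 m))).1 i - l (true, i)) ^+ 2 <= \sum_(i < N) d ^+ 2.
    by apply: ler_sum => i _; exact: (e1 true i).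
  have s2 : \sum_(i < N) ((u (f (maxn K0 m))).2 i - l (false, i)) ^+ 2 <= \sum_(i < N) d ^+ 2.
    by apply: ler_sum => i _; exact: (e1 false i).
  move: s1 s2; rewrite sumr_const card_ord -mulr_natl; lra.
have hN := ler0n R N.
have hfin : 2 * N%:R * d ^+ 2 < e ^+ 2.
  have ed : d * (2 * N%:R + 1) = e by rewrite /d divfK //; lra.
  rewrite -ed; nra.
have := sqr_dist (u (f (maxn K0 m))) (fun i => l (true, i), fun i => l (false, i)).
have := dist_ge0 (u (f (maxn K0 m))) (fun i => l (true, i), fun i => l (false, i)).
nra.
Qed.

End Clus.

Section Gen.
Variables (R : realType) (N Nm : nat) (W H : R) (w h : 'I_N -> R) (lam : R).
Local Notation pt := (pt R N).
Local Notation Ct := (@Ct R N Nm W H w h).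
Local Notation Ctk := (@Ctk R N Nm W H w h).
Local Notation Tmap := (@Tmap R N Nm W H w h lam).

Lemma fin_min (T : finType) (P : T -> R -> Prop) :
  (forall t, exists2 g, 0 < g & forall g', 0 < g' -> g' <= g -> P t g') ->
  exists2 g, 0 < g & forall t, P t g.
Proof.
move=> hP.
suff : forall s : seq T, exists2 g, 0 < g & forall t, t \in s -> forall g', 0 < g' -> g' <= g -> P t g'.
  case/(_ (enum T)) => g g0 hg; exists g => // t; apply: hg => //; by rewrite mem_enum.
elim=> [|a s [g g0 hg]]; first by exists 1.
have [ga ga0 hga] := hP a.
exists (Num.min g ga); first by rewrite lt_min g0 ga0.
move=> t; rewrite inE => /orP[/eqP -> | ts] g' g'0; rewrite le_min => /andP[h1 h2].
  exact: hga.
exact: hg.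
Qed.

Lemma Ct_gap t (x : pt) : ~ Ct t x ->
  exists2 g, 0 < g & forall p, dist p x < g -> ~ Ct t p.
Proof.
move=> nC.
have nk : forall k, ~ Ctk t k x by move=> k Ck; apply: nC; exact: Ctk_Ct Ck.
have [g1 g10 h1] := Cijk_gap (nk SL).
have [g2 g20 h2] := Cijk_gap (nk SR).
have [g3 g30 h3] := Cijk_gap (nk SB).
have [g4 g40 h4] := Cijk_gap (nk SA).
exists (Num.min (Num.min g1 g2) (Num.min g3 g4)); first by rewrite !lt_min g10 g20 g30 g40.
move=> p; rewrite !lt_min => /andP[/andP[d1 d2] /andP[d3 d4]] /Ct_ex [[] hk].
- exact: h1 d1 hk.
- exact: h2 d2 hk.
- exact: h3 d3 hk.
- exact: h4 d4 hk.
Qed.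

Lemma Ct_closed t (x : pt) : (forall e, 0 < e -> exists p, dist p x < e /\ Ct t p) -> Ct t x.
Proof.
move=> hC; apply: contrapT => nC; have [g g0 hg] := Ct_gap nC.
have [p [dp Cp]] := hC g g0; exact: hg dp Cp.
Qed.

Lemma gap_unif (x : pt) : exists2 g, 0 < g & forall t k p, ~ Ctk t k x -> dist p x < g -> ~ Ctk t k p.
Proof.
apply: (@fin_min _ (fun t g => forall k p, ~ Ctk t k x -> dist p x < g -> ~ Ctk t k p)) => t.
have gk : forall k, exists2 g, 0 < g & forall p, ~ Ctk t k x -> dist p x < g -> ~ Ctk t k p.
  move=> k; have [Ck|nCk] := pselect (Ctk t k x); first by exists 1 => // p /(_ Ck).
  have [g g0 hg] := Cijk_gap nCk; exists g => // p _; exact: hg.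
have [g1 g10 h1] := gk SL; have [g2 g20 h2] := gk SR.
have [g3 g30 h3] := gk SB; have [g4 g40 h4] := gk SA.
exists (Num.min (Num.min g1 g2) (Num.min g3 g4)); first by rewrite !lt_min g10 g20 g30 g40.
move=> g' g'0 hg' [] p nC dp; move: hg'; rewrite !le_min => /andP[/andP[e1 e2] /andP[e3 e4]].
- by apply: h1 nC _; apply: lt_le_trans dp e1.
- by apply: h2 nC _; apply: lt_le_trans dp e2.
- by apply: h3 nC _; apply: lt_le_trans dp e3.
- by apply: h4 nC _; apply: lt_le_trans dp e4.
Qed.

Lemma Good_of_fixed (x : pt) : (forall t, Ct t x) -> exists2 g, 0 < g & Good Nm W H w h x g.
Proof.
move=> hx; have [g g0 hg] := gap_unif x.
exists (g / 2); first by rewrite divr_gt0.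
move=> z hz t p hp; have [Cp hm] := Pset_min hp.
have [k Ck] := Ct_ex Cp; exists k; split => //.
apply: contrapT => nC; apply: (hg t k p nC _ Ck).
have h1 := hm x (hx t).
have := dist_tri p z x; rewrite (distC p z); lra.
Qed.

Lemma Fix_of_Ct t (x : pt) : Ct t x -> Fix W H w h lam t x.
Proof.
move=> Cx; exists x; first exact: Pset_in.
by apply: pt_ext => i /=; ring.
Qed.

End Gen.

Section Gen2.
Variables (R : realType) (N Nm : nat) (W H : R) (w h : 'I_N -> R) (lam : R).
Local Notation pt := (pt R N).
Local Notation Ct := (@Ct R N Nm W H w h).
Local Notation Ctk := (@Ctk R N Nm W H w h).
Hypothesis hlam : 0 < lam < 2.

Lemma dist_step (z p : pt) : dist (relax lam z p) z = lam * dist p z.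
Proof.
case/andP: hlam => l0 _.
by rewrite !distE step_n2 sqrtrM ?sqr_ge0 // sqrtr_sqr ger0_norm // ltW.
Qed.

Lemma GEN (zs : pt) eps (z : nat -> pt) (tt : nat -> pairT N Nm) n0 :
  Good Nm W H w h zs eps -> MAP_traj W H w h lam z tt -> dist (z n0) zs < eps ->
  (forall n, (n0 <= n)%N -> dist (z n) zs < eps) /\
  exists zt : pt, (forall t : pairT N Nm, Fix W H w h lam t zt) /\
    (forall e, 0 < e -> exists m, forall n, (m <= n)%N -> dist (z n) zt < e).
Proof.
move=> hG [htr hsw] h0.
have inv := INV hlam htr hG h0.
split; first by move=> n hn; exact: (inv n hn).1.
have [zt hzt] : exists zt : pt, forall e, 0 < e -> forall m, exists n, (m <= n)%N /\ (n0 <= n)%N /\ dist (z n) zt < e.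
  have [zt hc] := @cluster R N (fun n => z (n + n0)) zs eps (fun n => ltW (inv _ (leq_addl n n0)).1).
  exists zt => e e0 m; have [n [hn hd]] := hc e e0 m.
  exists (n + n0); split; [exact: leq_trans hn (leq_addr _ _)|split => //; exact: leq_addl].
have hCt : forall t, Ct t zt.
  move=> t; apply: Ct_closed => g g0.
  set M := #|{: pairT N Nm}|.
  have M0 : (0 < M)%N by apply/card_gt0P; exists t.
  case/andP: hlam => l0 l2.
  have hM := ler0n R M.
  set eta := g * lam / (8 * (M%:R + 1)).
  have eta0 : 0 < eta by rewrite /eta divr_gt0 ?mulr_gt0 //; lra.
  have eeta : eta * (8 * (M%:R + 1)) = g * lam by rewrite /eta divfK //; lra.
  have [m0 [hm0 hsm]] := steps_small hlam htr hG h0 eta0.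
  have g40 : 0 < g / 4 by rewrite divr_gt0.
  have [n [hn [_ hdn]]] := hzt _ g40 m0.
  have [n' [/andP[hn1 hn2] htn]] := hsw (n %/ M).+1 t.
  have hnn' : (n <= n')%N by have := ltn_ceil n M0; move: hn1; lia.
  have hL : (n' - n <= 2 * M)%N.
    have := leq_trunc_div n M; move: hn2; rewrite !mulSn; lia.
  have [p hp e1] := htr n'.
  rewrite htn in hp.
  exists p; split; last by case: (Pset_min hp).
  have hst := hsm n' (leq_trans hn hnn').
  rewrite -e1 dist_step in hst.
  have hch := chain hsm (n' - n) hn; rewrite subnKC // in hch.
  have hLR : ((n' - n)%:R : R) <= 2 * M%:R by rewrite -natrM ler_nat.
  have hD : dist (z n') (z n) <= 2 * M%:R * eta by have := ltW eta0; nra.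
  have t1 := dist_tri p (z n') zt; have t2 := dist_tri (z n') (z n) zt.
  set dp := dist p (z n') in hst t1.
  have dp0 : 0 <= dp := dist_ge0 _ _.
  have hdp : dp * (8 * (M%:R + 1)) < g.
    have : lam * dp * (8 * (M%:R + 1)) < lam * g by rewrite -[lam * g]mulrC -eeta ltr_pM2r //; lra.
    by rewrite -mulrA ltr_pM2l.
  have hD' : dist (z n') (z n) * (8 * (M%:R + 1)) <= 4 * M%:R * g.
    have : dist (z n') (z n) * (8 * (M%:R + 1)) <= 2 * M%:R * (eta * (8 * (M%:R + 1))).
      have h8 : (0 : R) <= 8 * (M%:R + 1) by lra.
      nra.
    have hMg : 0 <= M%:R * g by rewrite mulr_ge0 // ltW.
    have : M%:R * g * lam <= M%:R * g * 2 by rewrite ler_wpM2l // ltW.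
    rewrite eeta; lra.
  have hMp : (0 : R) < 8 * (M%:R + 1) by lra.
  have hDg : dist (z n') (z n) < g / 2.
    rewrite -(ltr_pM2r hMp); apply: le_lt_trans hD' _.
    have : 0 < g / 2 * 8 by rewrite mulr_gt0 // divr_gt0.
    have -> : g / 2 * (8 * (M%:R + 1)) = 4 * M%:R * g + g / 2 * 8 by field.
    lra.
  have hdpg : dp < g / 8.
    rewrite -(ltr_pM2r hMp); apply: lt_le_trans hdp _.
    have -> : g / 8 * (8 * (M%:R + 1)) = g + M%:R * g by field.
    have : 0 <= M%:R * g by rewrite mulr_ge0 // ltW.
    lra.
  lra.
exists zt; split; first by move=> t; exact: Fix_of_Ct (hCt t).
have [gz gz0 hGz] := Good_of_fixed hCt.
move=> e e0.
set e' := Num.min e gz.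
have e'0 : 0 < e' by rewrite lt_min e0 gz0.
have [n [_ [_ hdn]]] := hzt e' e'0 0%N.
have hGe : Good Nm W H w h zt e' by apply: Good_mono hGz; rewrite ge_min lexx orbT.
exists n => m hm; apply: lt_le_trans (INV hlam htr hGe hdn hm).1 _.
by rewrite ge_min lexx.
Qed.

End Gen2.


Section GCore.
Variables (R : realType) (N : nat).
Local Notation pt := (pt R N).

Lemma gcore (s p z : pt) (U : pt -> R) (A B r2 : R) :
  (forall a x b y, U (lin a x b y) = a * U x + b * U y) ->
  (forall x y, (U x - U y) ^+ 2 <= 2 * n2 (ptsub x y)) ->
  0 < r2 -> r2 ^+ 2 = 2 ->
  0 < A + B -> A <= U s -> U p <= - B ->
  r2 * dist z s < U s - (A - B) / 2 ->
  exists tau, [/\ 0 <= tau <= 1, U (lin (1 - tau) s tau p) = A &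
     n2 (ptsub z (lin (1 - tau) s tau p)) < n2 (ptsub z p)].
Proof.
move=> Ul Uq r20 r2e AB0 hAs hBp hg.
set D := U s - U p.
have D0 : 0 < D by rewrite /D; lra.
set tau := (U s - A) / D.
have etau : tau * D = U s - A by rewrite /tau divfK // gt_eqF.
have tau0 : 0 <= tau by rewrite /tau divr_ge0 //; lra.
have tau1 : tau < 1 by rewrite /tau ltr_pdivrMr // mul1r /D; lra.
exists tau; split.
- by rewrite tau0 ltW.
- by rewrite Ul; rewrite /D in etau; lra.
have -> : ptsub z (lin (1 - tau) s tau p) = lin 1 (ptsub z s) (- tau) (ptsub p s).
  by apply: pt_ext => i /=; ring.
have -> : ptsub z p = lin 1 (ptsub z s) (-1) (ptsub p s).
  by apply: pt_ext => i /=; ring.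
rewrite !n2_lin.
have hcs := CS (ptsub z s) (ptsub p s).
set na := n2 (ptsub z s) in hcs *; set nv := n2 (ptsub p s) in hcs *.
set ipv := ip (ptsub z s) (ptsub p s) in hcs *.
have nv0 : 0 <= nv by exact: n2_ge0.
have sa0 : 0 <= Num.sqrt na by exact: sqrtr_ge0.
have sv0 : 0 <= Num.sqrt nv by exact: sqrtr_ge0.
have svq : Num.sqrt nv ^+ 2 = nv by rewrite sqr_sqrtr.
have hD2 : D ^+ 2 <= 2 * nv.
  have hh := Uq p s.
  have -> : D = - (U p - U s) by rewrite /D; ring.
  by rewrite sqrrN.
have hrs : D <= r2 * Num.sqrt nv.
  have : D ^+ 2 <= (r2 * Num.sqrt nv) ^+ 2 by rewrite exprMn r2e svq.
  have : 0 <= r2 * Num.sqrt nv by rewrite mulr_ge0 // ltW.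
  nra.
have sv_pos : 0 < Num.sqrt nv by nra.
have hsa : r2 * Num.sqrt na < U s - (A - B) / 2 by rewrite -distE.
have key1 : 2 * (r2 * Num.sqrt na) < (1 + tau) * (r2 * Num.sqrt nv).
  have : (1 + tau) * D <= (1 + tau) * (r2 * Num.sqrt nv) by rewrite ler_wpM2l //; lra.
  rewrite /D in etau *; nra.
have key2 : 2 * Num.sqrt na < (1 + tau) * Num.sqrt nv.
  by move: key1; rewrite mulrCA [X in _ < X]mulrCA ltr_pM2l.
have key3 : 2 * ipv < (1 + tau) * nv.
  rewrite -svq; nra.
nra.
Qed.

Lemma two_le_n2 (x : pt) i j : i != j ->
  x.1 i ^+ 2 + x.1 j ^+ 2 <= n2 x /\ x.2 i ^+ 2 + x.2 j ^+ 2 <= n2 x.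
Proof.
move=> hij.
have hf : forall f : 'I_N -> R, f i ^+ 2 + f j ^+ 2 <= \sum_(k < N) f k ^+ 2.
  move=> f; rewrite (bigD1 i) //= (bigD1 j) /=; last by rewrite eq_sym.
  rewrite addrA lerDl sumr_ge0 // => k _; exact: sqr_ge0.
have g1 := sum_sq_ge0 x.1; have g2 := sum_sq_ge0 x.2.
have := hf x.1; have := hf x.2; rewrite /n2; split; lra.
Qed.

End GCore.

Section Alt2.
Variables (R : realType) (N : nat) (W H : R) (w h : 'I_N -> R).
Local Notation pt := (pt R N).
Local Notation Cijk := (Cijk W H w h).

Definition opp (k : side) : side :=
  match k with SL => SR | SR => SL | SB => SA | SA => SB end.

Definition gv (i j : 'I_N) (k : side) (s : pt) : R :=
  match k with
  | SL | SR => `|s.1 i - s.1 j + (w i - w j) / 2|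
  | _ => `|s.2 i - s.2 j + (h i - h j) / 2|
  end.

Lemma Bone_conv i (x y : pt) (t : R) : 0 <= t <= 1 ->
  Bone W H w h i x -> Bone W H w h i y -> Bone W H w h i (lin (1 - t) x t y).
Proof.
move=> /andP[t0 t1] [a1 a2 a3 a4] [b1 b2 b3 b4]; rewrite /Bone /=.
split; nra.
Qed.

Lemma alt2_gen i j k (s p z : pt) (U : pt -> R) (A B r2 : R) :
  (forall a x b y, U (lin a x b y) = a * U x + b * U y) ->
  (forall x y, (U x - U y) ^+ 2 <= 2 * n2 (ptsub x y)) ->
  0 < r2 -> r2 ^+ 2 = 2 ->
  0 < A + B -> A <= U s -> U p <= - B ->
  r2 * dist z s < U s - (A - B) / 2 ->
  (forall x, ms w h i j k x = U x - A) ->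
  Bone W H w h i s -> Bone W H w h j s -> Bone W H w h i p -> Bone W H w h j p ->
  exists q, Cijk i j k q /\ n2 (ptsub z q) < n2 (ptsub z p).
Proof.
move=> Ul Uq r20 r2e AB hs hp hg hms bis bjs bip bjp.
have [tau [ht hU hlt]] := gcore Ul Uq r20 r2e AB hs hp hg.
exists (lin (1 - tau) s tau p); split => //.
apply/CijkP; rewrite hms hU subrr lexx; split => //.
by split; apply: Bone_conv.
Qed.

Lemma Uq_lemma i j (hij : i != j) (f : pt -> 'I_N -> R)
  (hf : forall x y k, f (ptsub x y) k = f x k - f y k)
  (hn : forall x : pt, f x i ^+ 2 + f x j ^+ 2 <= n2 x) (x y : pt) :
  ((f x j - f x i) - (f y j - f y i)) ^+ 2 <= 2 * n2 (ptsub x y).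
Proof.
have := hn (ptsub x y); rewrite !hf => hh.
have : ((f x j - f y j) - (f x i - f y i)) ^+ 2 <= 2 * ((f x i - f y i) ^+ 2 + (f x j - f y j) ^+ 2).
  have := sqr_ge0 ((f x j - f y j) + (f x i - f y i)); nra.
have -> : (f x j - f x i) - (f y j - f y i) = (f x j - f y j) - (f x i - f y i) by ring.
lra.
Qed.

Lemma alt2_core (i j : 'I_N) (hij : i != j) (hw : 0 < w i + w j) (hh : 0 < h i + h j)
  k (s p z : pt) (r2 : R) : 0 < r2 -> r2 ^+ 2 = 2 ->
  Cijk i j (opp k) s -> Cijk i j k p -> r2 * dist z s < gv i j k s ->
  exists q, Cijk i j (opp k) q /\ n2 (ptsub z q) < n2 (ptsub z p).
Proof.
move=> r20 r2e /CijkP [ms_s [bis bjs]] /CijkP [ms_p [bip bjp]].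
have Uq1 := @Uq_lemma i j hij (fun x => x.1) (fun x y k => erefl) (fun x => (two_le_n2 x hij).1).
have Uq2 := @Uq_lemma i j hij (fun x => x.2) (fun x y k => erefl) (fun x => (two_le_n2 x hij).2).
have Uq1' : forall x y : pt, ((x.1 i - x.1 j) - (y.1 i - y.1 j)) ^+ 2 <= 2 * n2 (ptsub x y).
  move=> x y; have := Uq1 x y; have -> : (x.1 j - x.1 i - (y.1 j - y.1 i)) = - (x.1 i - x.1 j - (y.1 i - y.1 j)) by ring.
  by rewrite sqrrN.
have Uq2' : forall x y : pt, ((x.2 i - x.2 j) - (y.2 i - y.2 j)) ^+ 2 <= 2 * n2 (ptsub x y).
  move=> x y; have := Uq2 x y; have -> : (x.2 j - x.2 i - (y.2 j - y.2 i)) = - (x.2 i - x.2 j - (y.2 i - y.2 j)) by ring.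
  by rewrite sqrrN.
case: k ms_s ms_p => ms_s ms_p hg; simpl in ms_s, ms_p, hg.
{ have hpos : 0 <= s.1 i - s.1 j + (w i - w j) / 2 by lra.
  move: hg; rewrite (ger0_norm hpos) => hg.
  apply: (@alt2_gen _ _ _ s p z (fun x => x.1 i - x.1 j) (w j) (w i) r2) => //=.
  all: first [ by move=> a x b y /=; ring | by move=> x /=; ring | lra ]. }
{ have hneg : s.1 i - s.1 j + (w i - w j) / 2 <= 0 by lra.
  move: hg; rewrite (ler0_norm hneg) => hg.
  apply: (@alt2_gen _ _ _ s p z (fun x => x.1 j - x.1 i) (w i) (w j) r2) => //=.
  all: first [ by move=> a x b y /=; ring | by move=> x /=; ring | lra ]. }
{ have hpos : 0 <= s.2 i - s.2 j + (h i - h j) / 2 by lra.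
  move: hg; rewrite (ger0_norm hpos) => hg.
  apply: (@alt2_gen _ _ _ s p z (fun x => x.2 i - x.2 j) (h j) (h i) r2) => //=.
  all: first [ by move=> a x b y /=; ring | by move=> x /=; ring | lra ]. }
{ have hneg : s.2 i - s.2 j + (h i - h j) / 2 <= 0 by lra.
  move: hg; rewrite (ler0_norm hneg) => hg.
  apply: (@alt2_gen _ _ _ s p z (fun x => x.2 j - x.2 i) (h i) (h j) r2) => //=.
  all: first [ by move=> a x b y /=; ring | by move=> x /=; ring | lra ]. }
Qed.

End Alt2.


Section Fin.
Variables (R : realType) (N Nm : nat) (W H : R) (w h : 'I_N -> R).
Local Notation pt := (pt R N).
Local Notation Ct := (@Ct R N Nm W H w h).
Local Notation Ctk := (@Ctk R N Nm W H w h).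
Local Notation Kset := (@Kset R N Nm W H w h).
Local Notation desc := (@desc R N Nm W H w h).
Local Notation dsep := (@dsep R N Nm W H w h).

Lemma zs_in (lam : R) t (zs : pt) : 0 < lam -> Fix W H w h lam t zs -> Ct t zs.
Proof.
move=> l0 [p hp e]; have <- : p = zs; last by case: hp.
apply: pt_ext => i.
  have := congr1 (fun x => x.1 i) e => /= e1.
  have : lam * (p.1 i - zs.1 i) = 0 by lra.
  by move/eqP; rewrite mulf_eq0 gt_eqF //= subr_eq0 => /eqP.
have := congr1 (fun x => x.2 i) e => /= e1.
have : lam * (p.2 i - zs.2 i) = 0 by lra.
by move/eqP; rewrite mulf_eq0 gt_eqF //= subr_eq0 => /eqP.
Qed.

Lemma KsetP t (zs : pt) k : Ct t zs -> (Kset t zs k <-> Ctk t k zs).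
Proof.
move=> Czs; split.
  case=> c [hc1 hc2]; have e := Pset_self Czs hc2; subst c; by case: hc1.
by move=> Ck; exists zs; split; apply: Pset_in.
Qed.

Lemma desc_le t (zs : pt) k y : Kset t zs k -> ~ Ctk t k y -> desc zs t <= dist y zs.
Proof.
move=> hk ny; apply: inf_le_elt; first by move=> r [x _ <-]; exact: dist_ge0.
by exists y => //; exists k.
Qed.

Lemma desc_ge0 t (zs : pt) : 0 <= desc zs t.
Proof. by apply: inf_ge0 => r [x _ <-]; exact: dist_ge0. Qed.

Lemma dsep_le t (zs : pt) k : ~ Kset t zs k -> dsep zs t <= dset zs (Ctk t k).
Proof.
move=> nk; apply: inf_le_elt; first by move=> r [x _ <-]; exact: dset_ge0.
by exists k.
Qed.

Lemma dsep_ge0 t (zs : pt) : 0 <= dsep zs t.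
Proof. by apply: inf_ge0 => r [x _ <-]; exact: dset_ge0. Qed.

Definition Good_t (zs : pt) (eps : R) t := forall z, dist z zs < eps ->
  forall p, Pset (Ct t) z p -> exists k, Ctk t k zs /\ Ctk t k p.

Lemma good_desc t (zs : pt) eps : Ct t zs -> eps <= desc zs t -> Good_t zs eps t.
Proof.
move=> Czs he z hz p hp.
have [k Ck] := Ct_ex Czs.
have Cz : Ctk t k z.
  apply: contrapT => nz; have := desc_le ((KsetP _ Czs).2 Ck) nz; lra.
exists k; split => //; by rewrite (Pset_self (Ctk_Ct Cz) hp).
Qed.

Lemma good_alt1 t (zs : pt) eps k0 : Ct t zs -> Kset t zs = [set k0] ->
  eps <= dsep zs t -> eps <= (dsep zs t + desc zs t) / 2 -> Good_t zs eps t.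
Proof.
move=> Czs hK he1 he2 z hz p hp.
have [Cp hm] := Pset_min hp; have [k' Ck'] := Ct_ex Cp.
have [Czk|nCzk] := pselect (Ctk t k' zs); first by exists k'.
exfalso.
have nK' : ~ Kset t zs k' by move/(KsetP _ Czs).
have hsep : dsep zs t <= dist zs p := le_trans (dsep_le nK') (dset_le _ Ck').
have K0 : Kset t zs k0 by rewrite hK.
have C0 : Ctk t k0 zs := (KsetP _ Czs).1 K0.
have de0 := desc_ge0 t zs; have ds0 := dsep_ge0 t zs.
set d := dist z zs in hz.
have d0 : 0 <= d := dist_ge0 _ _.
suff [y [Cy hy]] : exists y, Ctk t k0 y /\ dist z y < dsep zs t - d.
  have := hm y (Ctk_Ct Cy); have := dist_tri zs z p; rewrite (distC zs z) -/d; lra.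
have [hd|hd] := ltP d (desc zs t).
  exists z; split; last by rewrite dist0; lra.
  apply: contrapT => nz; have := desc_le K0 nz; rewrite -/d; lra.
set s := (2 * d - dsep zs t + desc zs t) / 2.
have [hs|hs] := lerP s 0.
  exists zs; split => //; rewrite /s in hs; rewrite -/d; lra.
have dpos : 0 < d by rewrite /s in hs; lra.
have sd : s <= d by rewrite /s; lra.
exists (lin (1 - s / d) zs (s / d) z).
have e1 : dist (lin (1 - s / d) zs (s / d) z) zs = s.
  rewrite distE (_ : ptsub _ _ = lin (s / d) (ptsub z zs) 0 (ptsub z zs)); last first.
    by apply: pt_ext => i /=; ring.
  rewrite norm_scale -distE -/d ger0_norm; last by rewrite divr_ge0 // ltW.
  by rewrite divfK // gt_eqF.
have e2 : dist z (lin (1 - s / d) zs (s / d) z) = d - s.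
  rewrite distE (_ : ptsub _ _ = lin (1 - s / d) (ptsub z zs) 0 (ptsub z zs)); last first.
    by apply: pt_ext => i /=; ring.
  rewrite norm_scale -distE -/d ger0_norm; last by rewrite subr_ge0 ler_pdivrMr // mul1r.
  clear hK; rewrite mulrBl mul1r divfK ?gt_eqF //.
split; last by rewrite e2 /s; lra.
apply: contrapT => ny; have := desc_le K0 ny; rewrite e1 /s; lra.
Qed.

Lemma side_opp (k' k1 k2 : side) (Q : side -> Prop) : k1 <> k2 ->
  (forall k, Q k <-> (k = k1 \/ k = k2)) -> ~ Q k' -> ~ (Q SL /\ Q SR) -> ~ (Q SB /\ Q SA) ->
  Q (opp k').
Proof.
move=> hne hQ; rewrite !hQ; clear hQ.
by case: k1 k2 k' hne => [] [] [] //= hne; intuition (try discriminate; auto).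
Qed.

End Fin.

Section Fin2.
Variables (R : realType) (N Nm : nat) (W H : R) (w h : 'I_N -> R).
Local Notation pt := (pt R N).
Local Notation Ct := (@Ct R N Nm W H w h).
Local Notation Ctk := (@Ctk R N Nm W H w h).
Local Notation Kset := (@Kset R N Nm W H w h).
Local Notation desc := (@desc R N Nm W H w h).
Local Notation dsep := (@dsep R N Nm W H w h).
Hypothesis hpos : forall i : 'I_N, (i < Nm)%N -> 0 < w i /\ 0 < h i.

Lemma good_alt2 t (zs : pt) eps k1 k2 : Ct t zs -> k1 <> k2 ->
  Kset t zs = [set k1] `|` [set k2] ->
  eps <= gfun (zs.1 (val t).1) (zs.1 (val t).2) (w (val t).1) (w (val t).2) ->
  eps <= gfun (zs.2 (val t).1) (zs.2 (val t).2) (h (val t).1) (h (val t).2) ->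
  Good_t W H w h zs eps t.
Proof.
move=> Czs hne hK hx hy z hz p hp.
have [Cp hm] := Pset_min hp; have [k' Ck'] := Ct_ex Cp.
have [Czk|nCzk] := pselect (Ctk t k' zs); first by exists k'.
exfalso.
have hQ : forall k, Ctk t k zs <-> (k = k1 \/ k = k2).
  by move=> k; rewrite -(KsetP k Czs) hK.
clear hK.
move: t Czs hx hy hp Cp hm Ck' nCzk hQ => [[i j] /= hP] Czs hx hy hp Cp hm Ck' nCzk hQ.
have [hij hjn] := andP hP.
have hne' : i != j by apply/eqP => e; move: hij; rewrite e ltnn.
have [wi hi] := hpos (ltn_trans hij hjn); have [wj hj] := hpos hjn.
have hw : 0 < w i + w j by lra.
have hh : 0 < h i + h j by lra.
have Copp : Ctk (exist _ (i, j) hP) (opp k') zs.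
  apply: (side_opp hne hQ nCzk).
    move=> [/CijkP [m1 _] /CijkP [m2 _]]; move: m1 m2 => /= m1 m2; clear -m1 m2 hw hh; lra.
  move=> [/CijkP [m1 _] /CijkP [m2 _]]; move: m1 m2 => /= m1 m2; clear -m1 m2 hw hh; lra.
clear hQ hne.
have r20 : 0 < Num.sqrt (2 : R) by rewrite sqrtr_gt0.
have r2e : Num.sqrt (2 : R) ^+ 2 = 2 by rewrite sqr_sqrtr.
have hg : Num.sqrt 2 * dist z zs < gv w h i j k' zs.
  case: k' Ck' nCzk Copp => _ _ _ /=;
  [ have := lt_le_trans hz hx | have := lt_le_trans hz hx
  | have := lt_le_trans hz hy | have := lt_le_trans hz hy ];
  by rewrite /gfun ltr_pdivlMr // mulrC.
have [q [Cq hq]] := alt2_core hne' hw hh r20 r2e Copp Ck' hg.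
have := dist_n2 (hm q (Ctk_Ct (t := exist _ (i, j) hP) (k := opp k') Cq)).
lra.
Qed.

Lemma good_rt_primary t (zs : pt) eps : Ct t zs -> eps < rt_primary W H w h zs t ->
  Good_t W H w h zs eps t.
Proof.
move=> Czs he; apply: good_desc => //; apply: ltW; apply: lt_le_trans he _.
by rewrite /rt_primary ge_min lexx orbT.
Qed.

Lemma good_rt_alt t (zs : pt) eps : Ct t zs -> eps < rt_alt W H w h zs t ->
  Good_t W H w h zs eps t.
Proof.
move=> Czs; rewrite /rt_alt.
destruct (pselect _) as [[k0 hK]|nK1].
  rewrite lt_min => /andP[h1 h2]; apply: (good_alt1 Czs hK); exact: ltW.
destruct (pselect _) as [[k1 [k2 [hne hK]]]|nK2]; last exact: good_rt_primary.
rewrite lt_min => /andP[h1 h2]; apply: (good_alt2 Czs hne hK); exact: ltW.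
Qed.

End Fin2.

Lemma inf_range_le (R : realType) (T : finType) (f : T -> R) t : inf (range f) <= f t.
Proof.
apply: ge_inf; last by exists t.
exists (- \sum_(s : T) `|f s|) => _ [s _ <-].
have : `|f s| <= \sum_(s : T) `|f s|.
  by rewrite (bigD1 s) //= lerDl sumr_ge0.
have := ler_normr (f s); rewrite lerNl; move: (ler_norm (- f s)); rewrite normrN.
lra.
Qed.


Unset Implicit Arguments.

Theorem mainTheorem3 (R : realType) (N Nm : nat) (W H : R) (w h : 'I_N -> R)
    (lam : R) :
  (2 <= Nm)%N -> (Nm <= N)%N -> 0 < W -> 0 < H ->
  (forall i : 'I_N, (i < Nm)%N -> 0 < w i /\ 0 < h i) ->
  (forall (t : pairT N Nm) (k : side), @Ctk R N Nm W H w h t k !=set0) ->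
  0 < lam < 2 ->
  forall zs : pt R N, (forall t : pairT N Nm, @Fix R N Nm W H w h lam t zs) ->
  @attractor_claim R N Nm W H w h lam zs (@rt_primary R N Nm W H w h zs) /\
  @attractor_claim R N Nm W H w h lam zs (@rt_alt R N Nm W H w h zs).
Proof.
move=> hNm hNmN W0 H0 hpos hne hlam zs hfix.
have l0 : 0 < lam by case/andP: hlam.
have Czs : forall t : pairT N Nm, @Ct R N Nm W H w h t zs := fun t => zs_in l0 (hfix t).
have main : forall rt : pairT N Nm -> R,
    (forall t eps, eps < rt t -> @Good_t R N Nm W H w h zs eps t) ->
    @attractor_claim R N Nm W H w h lam zs rt.
  move=> rt hrt; rewrite /attractor_claim => r0 eps e0 er z tt htr n0 hb.
  have hG : @Good R N Nm W H w h zs eps.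
    move=> z' hz' t p hp; apply: (hrt t eps _ z' hz' p hp).
    exact: lt_le_trans er (inf_range_le rt t).
  exact (GEN hlam hG htr hb).
split; apply: main => t eps he.
  exact: good_rt_primary (Czs t) he.
exact (good_rt_alt hpos (Czs t) he).
Qed.
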